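(* Let $q>1$ and let $\rho$ be a positive $2\pi$-periodic $C^2$ function with $(\ln\rho)''(t)<\sqrt{q}/(1+\sqrt{q})$ for all $t$. Let $\rho_n=\ln\rho$, $\theta_q=\arccos(1/\sqrt{q})\in(0,\pi/2)$ and $h(\theta)=\dfrac{\sqrt{q}\sin\theta}{\sqrt{q}\cos\theta+1}$. Then for each $\eta\in\mathbb{S}^1$ and each $l\in\{1,2\}$, with $\eta_l=(-1)^{l-1}\eta$, the equation $$\rho_n'(\theta)=h(\theta-\theta_{\eta_l}),\qquad \theta\in\mathbb{R}/(2\pi\mathbb{Z}),$$ has exactly two solutions $\mathcal{T}_{1,l}\eta$ and $\mathcal{T}_{2,l}\eta$, which satisfy $\mathcal{T}_{1,l}\eta-\theta_{\eta_l}\in(\theta_q-\pi,\pi-\theta_q)$ and $\mathcal{T}_{2,l}\eta-\theta_{\eta_l}\in(\pi-\theta_q,\theta_q+\pi)$ (modulo $2\pi$).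
   Context: We identify $\mathbb{S}^1$ with $\mathbb{R}/(2\pi\mathbb{Z})$ via $\theta\mapsto(\cos\theta,\sin\theta)^T$; $\theta_\eta$ denotes the angular coordinate of $\eta\in\mathbb{S}^1$. The function $h$ has poles exactly where $\cos\theta=-1/\sqrt{q}$, i.e. at $\theta=\pm(\pi-\theta_q)$ mod $2\pi$. *)

(* Defs.v *)
From Stdlib Require Import Reals.
From Coquelicot Require Import Coquelicot.
Open Scope R_scope.

Definition h_fun (q th : R) : R := sqrt q * sin th / (sqrt q * cos th + 1).

Definition theta_q (q : R) : R := acos (1 / sqrt q).

Definition cong2pi (x y : R) : Prop := exists k : Z, x = y + 2 * PI * IZR k.

(* ρ is C^2 on R (Derive_n ρ 2 is the genuine second derivative
   since ρ and ρ' are differentiable everywhere) *)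
Definition C2 (f : R -> R) : Prop :=
  forall t, ex_derive f t /\ ex_derive (Derive f) t /\ continuous (Derive_n f 2) t.

(* Main.v *)
From Stdlib Require Import Reals Lra Lia ZArith.
From Coquelicot Require Import Coquelicot.
Require Import Defs.
Open Scope R_scope.

Lemma periodN (f : R -> R) : (forall t, f (t + 2*PI) = f t) ->
  forall (n : nat) t, f (t + 2*PI*INR n) = f t.
Proof.
  intros Hp n; induction n as [|n IH]; intro t.
  - simpl. f_equal. ring.
  - rewrite S_INR. replace (t + 2*PI*(INR n + 1)) with ((t + 2*PI*INR n) + 2*PI) by ring.
    rewrite Hp. apply IH.
Qed.

Lemma periodZ (f : R -> R) : (forall t, f (t + 2*PI) = f t) ->
  forall (k : Z) t, f (t + 2*PI*IZR k) = f t.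
Proof.
  intros Hp k t.
  destruct (Z_le_gt_dec 0 k) as [H|H].
  - rewrite <- (Z2Nat.id k H), <- INR_IZR_INZ. apply periodN; auto.
  - assert (Hk : k = (- Z.of_nat (Z.to_nat (- k)))%Z) by (rewrite Z2Nat.id; lia).
    rewrite Hk, opp_IZR, <- INR_IZR_INZ.
    set (n := Z.to_nat (-k)).
    rewrite <- (periodN f Hp n (t + 2 * PI * - INR n)). f_equal. ring.
Qed.

Lemma sin_2pi t : sin (t + 2*PI) = sin t.
Proof. rewrite <- (sin_period t 1). f_equal. simpl. ring. Qed.
Lemma cos_2pi t : cos (t + 2*PI) = cos t.
Proof. rewrite <- (cos_period t 1). f_equal. simpl. ring. Qed.

Lemma hbound s c : 1 < s -> -1 <= c <= 1 -> s*c+1 <> 0 ->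
  s/(1+s) <= s*(s+c)/(s*c+1)^2.
Proof.
  intros Hs Hc Hd.
  assert (Hp : 0 < (s*c+1)^2) by (apply pow2_gt_0; auto).
  assert (E : s*(s+c)/(s*c+1)^2 - s/(1+s) = s*(s^2*(1-c^2)+(s-1)*(1-c))/((s*c+1)^2*(1+s))).
  { field. split; [lra|auto]. }
  assert (0 <= s*(s^2*(1-c^2)+(s-1)*(1-c))/((s*c+1)^2*(1+s))).
  { apply Rdiv_le_0_compat; [| apply Rmult_lt_0_compat; lra].
    apply Rmult_le_pos; [lra|]. apply Rplus_le_le_0_compat.
    - apply Rmult_le_pos; [nra|nra].
    - nra. }
  lra.
Qed.

Lemma dH s u : s*cos u+1 <> 0 ->
  is_derive (fun u => s*sin u/(s*cos u+1)) u (s*(s+cos u)/(s*cos u+1)^2).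
Proof.
  intro Hd. auto_derive. auto.
  assert (Hsc: sin u ^2 + cos u^2 = 1) by (rewrite <- (sin2_cos2 u); unfold Rsqr; ring).
  replace (s + cos u) with (s*(sin u ^2 + cos u ^2) + cos u) by (rewrite Hsc; ring).
  field. auto.
Qed.

Lemma dG (g g' : R -> R) te s u : (forall x, is_derive g x (g' x)) -> s*cos u+1 <> 0 ->
  is_derive (fun u => g (u+te) - s*sin u/(s*cos u+1)) u (g'(u+te) - s*(s+cos u)/(s*cos u+1)^2).
Proof.
  intros Hg Hd. apply (is_derive_minus (fun u => g (u+te)) (fun u => s*sin u/(s*cos u+1))); [|apply dH; auto].
  replace (g' (u+te)) with (scal 1 (g' (u+te))) by (unfold scal; simpl; unfold mult; simpl; ring).
  apply (is_derive_comp g (fun u => u + te) u (g' (u+te)) 1) ; [apply Hg|].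
  auto_derive; auto; ring.
Qed.

Definition GG (g : R -> R) te s u := g (u+te) - s*sin u/(s*cos u+1).

Lemma Gdec g g' te s u1 u2 : 1 < s -> (forall x, is_derive g x (g' x)) ->
  (forall x, g' x < s/(1+s)) -> u1 < u2 -> (forall x, u1<=x<=u2 -> s*cos x+1<>0) ->
  GG g te s u2 < GG g te s u1.
Proof.
  intros Hs Hg Hg' H12 Hd.
  assert (D1 : forall x, Rmin u1 u2 < x < Rmax u1 u2 -> is_derive (GG g te s) x
     ((fun u => g'(u+te) - s*(s+cos u)/(s*cos u+1)^2) x)).
  { intros x Hx. rewrite Rmin_left in Hx by lra. rewrite Rmax_right in Hx by lra.
    apply dG; try (apply Hd; lra); auto. }
  assert (D2 : forall x, Rmin u1 u2 <= x <= Rmax u1 u2 -> continuity_pt (GG g te s) x).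
  { intros x Hx. rewrite Rmin_left in Hx by lra. rewrite Rmax_right in Hx by lra.
    apply continuity_pt_filterlim. apply (ex_derive_continuous (GG g te s)).
    eexists. apply dG; try (apply Hd; lra); auto. }
  destruct (MVT_gen (GG g te s) u1 u2 _ D1 D2) as [c [Hc E]].
  rewrite Rmin_left in Hc by lra. rewrite Rmax_right in Hc by lra.
  assert (hb := hbound s (cos c) Hs (COS_bound c) (Hd c Hc)).
  specialize (Hg' (c+te)).
  assert (g' (c + te) - s * (s + cos c) / (s * cos c + 1) ^ 2 < 0) by lra.
  assert (GG g te s u2 - GG g te s u1 < 0).
  { rewrite E. apply Rmult_neg_pos; lra. }
  lra.
Qed.

Lemma I1pos s a x : 1 < s -> cos a = 1/s -> 0 < a < PI -> a - PI < x < PI - a -> 0 < s*cos x + 1.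
Proof.
  intros Hs Ha Hab Hx.
  assert (cos (PI - a) < cos (Rabs x)).
  { apply cos_decreasing_1; try lra; unfold Rabs; destruct Rcase_abs; lra. }
  rewrite Rtrigo_facts.cos_pi_minus, Ha in H.
  assert (cos (Rabs x) = cos x) by (unfold Rabs; destruct Rcase_abs; auto; apply cos_neg).
  rewrite H0 in H.
  assert (s * (-(1/s)) < s * cos x) by (apply Rmult_lt_compat_l; lra).
  replace (s * (-(1/s))) with (-1) in H1 by (field; lra). lra.
Qed.

Lemma I2neg s a x : 1 < s -> cos a = 1/s -> 0 < a < PI -> PI - a < x < PI + a -> s*cos x + 1 < 0.
Proof.
  intros Hs Ha Hab Hx.
  assert (cos a < cos (Rabs (x - PI))).
  { apply cos_decreasing_1; try lra; unfold Rabs; destruct Rcase_abs; lra. }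
  rewrite Ha in H.
  assert (cos (Rabs (x-PI)) = - cos x).
  { replace x with ((x - PI) + PI) at 2 by ring. rewrite neg_cos, Ropp_involutive.
    unfold Rabs; destruct Rcase_abs; auto; apply cos_neg. }
  rewrite H0 in H.
  assert (s * (1/s) < s * (- cos x)) by (apply Rmult_lt_compat_l; lra).
  replace (s * (1/s)) with 1 in H1 by (field; lra). lra.
Qed.

Lemma uniq_int g g' te s lo hi u1 u2 : 1 < s -> (forall x, is_derive g x (g' x)) ->
  (forall x, g' x < s/(1+s)) -> (forall x, lo < x < hi -> s*cos x+1 <> 0) ->
  lo < u1 < hi -> lo < u2 < hi -> GG g te s u1 = 0 -> GG g te s u2 = 0 -> u1 = u2.
Proof.
  intros Hs Hg Hg' Hd H1 H2 E1 E2.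
  destruct (total_order_T u1 u2) as [[Hlt|Heq]|Hgt]; auto.
  - assert (GG g te s u2 < GG g te s u1) by (apply (Gdec g g'); auto; intros; apply Hd; lra). lra.
  - assert (GG g te s u1 < GG g te s u2) by (apply (Gdec g g'); auto; intros; apply Hd; lra). lra.
Qed.

Lemma Kcont (g g' : R -> R) te s : (forall x, is_derive g x (g' x)) ->
  continuity (fun u => g (u+te) * (s*cos u+1) - s*sin u).
Proof.
  intros Hg x. apply continuity_pt_filterlim.
  apply (ex_derive_continuous (fun u => g (u+te) * (s*cos u+1) - s*sin u)).
  auto_derive. exists (g' (x+te)). apply Hg.
Qed.

Lemma core (s a te : R) (g g' : R -> R) : 1 < s -> cos a = 1/s -> 0 < sin a -> 0 < a < PI ->
  (forall x, is_derive g x (g' x)) -> (forall x, g' x < s/(1+s)) ->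
  (forall x, g (x + 2*PI) = g x) ->
  let sol := fun th => s * cos (th - te) + 1 <> 0 /\ g th = s * sin (th-te) / (s*cos(th-te)+1) in
  exists T1 T2, sol T1 /\ sol T2 /\ a - PI < T1 - te < PI - a /\ PI - a < T2 - te < a + PI /\
    (forall th, sol th -> cong2pi th T1 \/ cong2pi th T2).
Proof.
  intros Hs Ha Hsa Hab Hg Hg' Hper sol.
  set (K := fun u => g (u+te) * (s*cos u+1) - s*sin u).
  assert (Kc : continuity K) by (apply (Kcont g g'); auto).
  assert (c1 : cos (a - PI) = -(1/s)).
  { replace (a - PI) with (-(PI - a)) by ring. rewrite cos_neg, Rtrigo_facts.cos_pi_minus; lra. }
  assert (s1 : sin (a - PI) = - sin a).
  { replace (a - PI) with (-(PI - a)) by ring. rewrite sin_neg, sin_PI_x; lra. }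
  assert (c2 : cos (PI - a) = -(1/s)) by (rewrite Rtrigo_facts.cos_pi_minus; lra).
  assert (s2 : sin (PI - a) = sin a) by (rewrite sin_PI_x; lra).
  assert (c3 : cos (PI + a) = -(1/s)) by (rewrite Rplus_comm, neg_cos; lra).
  assert (s3 : sin (PI + a) = - sin a) by (rewrite Rplus_comm, neg_sin; lra).
  assert (D0 : s * (-(1/s)) + 1 = 0) by (field; lra).
  assert (K1 : K (a - PI) = s * sin a) by (unfold K; rewrite c1, s1, D0; ring).
  assert (K2 : K (PI - a) = - (s * sin a)) by (unfold K; rewrite c2, s2, D0; ring).
  assert (K3 : K (PI + a) = s * sin a) by (unfold K; rewrite c3, s3, D0; ring).
  assert (Hssa : 0 < s * sin a) by (apply Rmult_lt_0_compat; lra).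
  destruct (IVT_cor K (a - PI) (PI - a) Kc) as [z1 [Hz1 Kz1]]; [lra| rewrite K1, K2; nra |].
  destruct (IVT_cor K (PI - a) (PI + a) Kc) as [z2 [Hz2 Kz2]]; [lra| rewrite K2, K3; nra |].
  assert (Hz1' : a - PI < z1 < PI - a).
  { split; apply Rnot_le_lt; intro; [assert (z1 = a - PI) by lra | assert (z1 = PI - a) by lra];
    subst z1; lra. }
  assert (Hz2' : PI - a < z2 < PI + a).
  { split; apply Rnot_le_lt; intro; [assert (z2 = PI - a) by lra | assert (z2 = PI + a) by lra];
    subst z2; lra. }
  assert (P1 := I1pos s a z1 Hs Ha Hab Hz1').
  assert (P2 := I2neg s a z2 Hs Ha Hab Hz2').
  assert (Hgz1 : GG g te s z1 = 0).
  { unfold GG. unfold K in Kz1. apply Rminus_diag_eq.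
    apply (Rmult_eq_reg_r (s * cos z1 + 1)); [|lra]. field_simplify; lra. }
  assert (Hgz2 : GG g te s z2 = 0).
  { unfold GG. unfold K in Kz2. apply Rminus_diag_eq.
    apply (Rmult_eq_reg_r (s * cos z2 + 1)); [|lra]. field_simplify; lra. }
  exists (z1 + te), (z2 + te). unfold sol.
  replace (z1 + te - te) with z1 by ring. replace (z2 + te - te) with z2 by ring.
  unfold GG in Hgz1, Hgz2.
  split; [split; lra|]. split; [split; lra|]. split; [lra|]. split; [lra|].
  - intros th [Hd Hth].
    set (u := th - te).
    set (r := (a + PI - u) / (2 * PI)).
    destruct (archimed r) as [A1 A2].
    set (k := (up r - 1)%Z).
    assert (Ek : IZR k = IZR (up r) - 1) by (unfold k; rewrite minus_IZR; auto).
    set (u' := u + 2 * PI * IZR k).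
    assert (PIpos := PI_RGT_0).
    assert (Er : 2 * PI * r = a + PI - u) by (unfold r; field; lra).
    assert (B1 : a - PI < u').
    { unfold u'. rewrite Ek. assert (2*PI*(IZR (up r) - 1) > 2*PI*(r-1)) by (apply Rmult_lt_compat_l; lra). nra. }
    assert (B2 : u' <= a + PI).
    { unfold u'. rewrite Ek. assert (2*PI*(IZR (up r) - 1) <= 2*PI*r) by (apply Rmult_le_compat_l; lra). nra. }
    assert (Cu : cos u' = cos u) by (apply periodZ; exact cos_2pi).
    assert (Su : sin u' = sin u) by (apply periodZ; exact sin_2pi).
    assert (Gu : g (u' + te) = g th).
    { replace (u' + te) with (th + 2 * PI * IZR k) by (unfold u', u; ring). apply periodZ; auto. }
    assert (Hd' : s * cos u' + 1 <> 0) by (rewrite Cu; auto).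
    assert (HG : GG g te s u' = 0) by (unfold GG; rewrite Gu, Su, Cu; fold u in Hth; lra).
    assert (Hc : th = u' + te + 2 * PI * IZR (- k)) by (rewrite opp_IZR; unfold u', u; ring).
    destruct (total_order_T u' (PI - a)) as [[L1|L1]|L1].
    + left. exists (- k)%Z.
      assert (u' = z1).
      { apply (uniq_int g g' te s (a - PI) (PI - a)); auto; try lra.
        intros x Hx. assert (H := I1pos s a x Hs Ha Hab Hx). lra. }
      rewrite Hc. rewrite H. ring.
    + exfalso. apply Hd'. rewrite L1, c2. exact D0.
    + destruct (Req_dec u' (a + PI)) as [L2|L2].
      * exfalso. apply Hd'. rewrite L2. replace (a + PI) with (PI + a) by ring. rewrite c3. exact D0.
      * right. exists (- k)%Z.
        assert (u' = z2).
        { apply (uniq_int g g' te s (PI - a) (PI + a)); auto; try lra.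
          intros x Hx. assert (H := I2neg s a x Hs Ha Hab Hx). lra. }
        rewrite Hc. rewrite H. ring.
Qed.

Theorem lemma4 (q : R) (rho : R -> R)
  (Hq : 1 < q)
  (Hpos : forall t, 0 < rho t)
  (Hper : forall t, rho (t + 2 * PI) = rho t)
  (HC2 : C2 rho)
  (Hconv : forall t, Derive_n (fun s => ln (rho s)) 2 t < sqrt q / (1 + sqrt q))
  (theta_eta : R) (l : nat) (Hl : l = 1%nat \/ l = 2%nat) :
  let theta_etal := theta_eta + INR (l - 1) * PI in
  let sol := fun th => sqrt q * cos (th - theta_etal) + 1 <> 0 /\
               Derive (fun s => ln (rho s)) th = h_fun q (th - theta_etal) in
  exists T1 T2 : R,
    sol T1 /\ sol T2 /\
    theta_q q - PI < T1 - theta_etal < PI - theta_q q /\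
    PI - theta_q q < T2 - theta_etal < theta_q q + PI /\
    (forall th, sol th -> cong2pi th T1 \/ cong2pi th T2).
Proof.
  intros te sol.
  set (s := sqrt q).
  assert (Hs : 1 < s).
  { unfold s. rewrite <- sqrt_1. apply sqrt_lt_1_alt. lra. }
  set (a := theta_q q).
  assert (Hb : -1 <= 1/s <= 1).
  { split; [apply Rle_trans with 0; [lra| left; apply Rdiv_lt_0_compat; lra]|].
    apply Rmult_le_reg_r with s; [lra|]. field_simplify; lra. }
  assert (Ha : cos a = 1/s) by (unfold a, theta_q; fold s; apply cos_acos; auto).
  assert (Hb2 : 0 < 1/s < 1).
  { split; [apply Rdiv_lt_0_compat; lra|]. apply Rmult_lt_reg_r with s; [lra|]. field_simplify; lra. }
  assert (Hsa : 0 < sin a).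
  { unfold a, theta_q; fold s. rewrite sin_acos; auto. apply sqrt_lt_R0. unfold Rsqr. nra. }
  assert (Hab : 0 < a < PI).
  { destruct (acos_bound (1/s)) as [B1 B2]. fold s in a. change (acos (1/s)) with a in B1, B2.
    split.
    - destruct B1 as [B1|B1]; auto. rewrite <- B1, cos_0 in Ha. lra.
    - destruct B2 as [B2|B2]; auto. rewrite B2, cos_PI in Ha. lra. }
  set (L := fun s => ln (rho s)).
  assert (dL : forall x, is_derive L x (Derive rho x / rho x)).
  { intro x. unfold L. auto_derive.
    - split; [apply HC2|]. split; [apply Hpos|auto].
    - rewrite Rmult_1_l. reflexivity. }
  assert (Eg : forall x, Derive L x = Derive rho x / rho x) by (intro; apply is_derive_unique, dL).
  assert (exg : forall x, ex_derive (Derive L) x).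
  { intro x. apply (ex_derive_ext (fun x => Derive rho x / rho x)); [intro; rewrite Eg; auto|].
    auto_derive. destruct (HC2 x) as [H1 [H2 _]]. split; [auto|split;[auto|]].
    repeat split; auto. apply Rgt_not_eq, Hpos. }
  assert (perL : forall x, Derive L (x + 2 * PI) = Derive L x).
  { intro x.
    assert (E1 : Derive (fun t => L (t + 2*PI)) x = Derive L x)
      by (apply Derive_ext; intro; unfold L; rewrite Hper; auto).
    rewrite (Derive_comp L (fun t => t + 2*PI) x) in E1.
    - replace (Derive (fun t => t + 2 * PI) x) with 1 in E1; [lra|].
      symmetry. apply is_derive_unique. auto_derive; auto; ring.
    - eexists; apply dL.
    - auto_derive; auto. }
  assert (core' := core s a te (Derive L) (Derive_n L 2) Hs Ha Hsa Hab).
  destruct core' as [T1 [T2 HH]].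
  - intro x. apply Derive_correct, exg.
  - exact Hconv.
  - exact perL.
  - exists T1, T2. exact HH.
Qed.
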